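(* For every $n\in\mathbb{N}$, $\phi(\omega^{2n})=P_n(1)$ and $\phi(\omega^{2n+1})=0$.
   Context: $\omega=a+a^*$ is the standard V-monotone Gaussian operator on the continuous V-monotone Fock space $\mathcal{CV}=\mathbb{C}\Lambda\oplus\bigoplus_{n\ge1}L^2(\mathcal X_n)$, with vacuum state $\phi(T)=\langle T\Lambda,\Lambda\rangle$, where $\mathcal X_n=\bigcup_{m=1}^n\{(x_1,\dots,x_n)\in\mathbb{R}^n:x_1>\dots>x_m<\dots<x_n\}$; $a\Lambda=\mathbb 1_{[0,1]}$, $(ag)(x,x_1,\dots,x_n)=\mathbb 1_{[0,1]}(x)\mathbb 1_{\mathcal X_{n+1}}(x,x_1,\dots,x_n)g(x_1,\dots,x_n)$, and $a^*$ is its adjoint, explicitly $a^*\Lambda=0$, $a^*g=(\int_0^1 g)\Lambda$ for $g\in L^2(\mathcal X_1)$, and $(a^*g)(\vec x)=\mathbb 1_{\mathcal X_{n,1}}(\vec x)\int_0^{x_1}g(x,\vec x)dx+\int_{x_1}^1 g(x,\vec x)dx$ for $g\in L^2(\mathcal X_{n+1})$, where $\mathcal X_{n,1}=\{x_1<\dots<x_n\}$. The polynomials $P_n,Q_n$ on $[0,1]$ are defined by $Q_0=P_0=1$, $Q_{n+1}(x)=\sum_{m=0}^n\big[\int_x^1Q_m(t)dt\big]Q_{n-m}(x)$, $P_{n+1}(x)=\sum_{m=0}^n\big[\int_0^xP_m(t)dt+\int_x^1Q_m(t)dt\big]P_{n-m}(x)$. *)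

(* Defs.v *)
From Stdlib Require Import Reals List Classical ClassicalEpsilon.
Import ListNotations.
Open Scope R_scope.

(** Total Riemann integral: the Riemann integral of f from a to b when f is
    Riemann integrable there, and 0 otherwise (RiemannInt does not depend on
    the integrability proof, RiemannInt_P5). *)
Definition Rint (f : R -> R) (a b : R) : R :=
  match excluded_middle_informative (inhabited (Riemann_integrable f a b)) with
  | left H => RiemannInt (epsilon H (fun _ => True))
  | right _ => 0
  end.

(** Polynomials Q_n, P_n (as functions on R), via lists of the first n+1 of them. *)
Fixpoint Qs (n : nat) : list (R -> R) :=
  match n with
  | O => [fun _ => 1]
  | S k => let L := Qs k in
      L ++ [fun x => sum_f_R0 (fun m =>
               Rint (nth m L (fun _ => 0)) x 1 * nth (k - m) L (fun _ => 0) x) k]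
  end.

Definition Q (n : nat) : R -> R := nth n (Qs n) (fun _ => 0).

Fixpoint Ps (n : nat) : list (R -> R) :=
  match n with
  | O => [fun _ => 1]
  | S k => let L := Ps k in
      L ++ [fun x => sum_f_R0 (fun m =>
               (Rint (nth m L (fun _ => 0)) 0 x + Rint (Q m) x 1)
               * nth (k - m) L (fun _ => 0) x) k]
  end.

Definition P (n : nat) : R -> R := nth n (Ps n) (fun _ => 0).

(** Fock space vectors: a single function on finite lists of reals.
    The value at [] is the coefficient of the vacuum Lambda; the restriction
    to lists of length n is the n-particle component (a function on R^n). *)
Definition FockV := list R -> R.

Definition ltb (x y : R) : bool := if Rlt_dec x y then true else false.

Fixpoint incrb (l : list R) : bool :=
  match l with
  | x :: ((y :: _) as t) => ltb x y && incrb t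
  | _ => true
  end.

(** membership in X_n (n = length l >= 1):
    exists m in 1..n with x1 > ... > xm < ... < xn *)
Fixpoint vshapeb (l : list R) : bool :=
  match l with
  | [] => false
  | [_] => true
  | x :: ((y :: _) as t) => (ltb y x && vshapeb t) || incrb l
  end.

Definition ind01 (x : R) : R :=
  if Rle_dec 0 x then (if Rle_dec x 1 then 1 else 0) else 0.

Definition indb (b : bool) : R := if b then 1 else 0.

Definition vac : FockV := fun l => match l with [] => 1 | _ => 0 end.

Definition aop (g : FockV) : FockV := fun l =>
  match l with
  | [] => 0
  | x :: xs => ind01 x * indb (vshapeb l) * g xs
  end.

Definition aadj (g : FockV) : FockV := fun l =>
  match l with
  | [] => Rint (fun x => g [x]) 0 1
  | x1 :: _ => indb (incrb l) * Rint (fun x => g (x :: l)) 0 x1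
               + Rint (fun x => g (x :: l)) x1 1
  end.

Definition omega (g : FockV) : FockV := fun l => aop g l + aadj g l.

Definition omega_pow (k : nat) (g : FockV) : FockV := Nat.iter k omega g.

(** vacuum state phi(T) = <T Lambda, Lambda> = Lambda-coefficient of T Lambda *)
Definition phi_omega_pow (k : nat) : R := omega_pow k vac [].

(* Main.v *)
Require Import Defs.
From Coquelicot Require Import Coquelicot.
From Stdlib Require Import Reals List Lia Lra Arith FunctionalExtensionality ClassicalEpsilon.
Import ListNotations.
Open Scope R_scope.

Definition conv (f g : nat -> R) (n : nat) : R :=
  sum_f_R0 (fun i => f i * g (n - i)%nat) n.

Lemma conv_ext f f' g g' n :
  (forall i, (i <= n)%nat -> f i = f' i) ->
  (forall i, (i <= n)%nat -> g i = g' i) -> conv f g n = conv f' g' n.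
Proof.
  intros H1 H2; unfold conv; apply sum_eq; intros i Hi.
  rewrite H1, H2 by lia; reflexivity.
Qed.

Lemma conv_front f g n :
  conv f g (S n) = f 0%nat * g (S n) + conv (fun i => f (S i)) g n.
Proof.
  unfold conv. rewrite decomp_sum by lia. simpl pred.
  f_equal.
Qed.

Lemma conv_back f g n :
  conv f g (S n) = f (S n) * g 0%nat + conv f (fun j => g (S j)) n.
Proof.
  unfold conv. rewrite tech5. rewrite Nat.sub_diag. rewrite Rplus_comm. f_equal.
  apply sum_eq; intros i Hi. f_equal. f_equal. lia.
Qed.

Lemma conv_plus_r f u v n :
  conv f (fun m => u m + v m) n = conv f u n + conv f v n.
Proof.
  unfold conv. rewrite <- sum_plus. apply sum_eq; intros; ring.
Qed.

Lemma conv_plus_l u v g n :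
  conv (fun m => u m + v m) g n = conv u g n + conv v g n.
Proof.
  unfold conv. rewrite <- sum_plus. apply sum_eq; intros; ring.
Qed.

Lemma conv_scal_r f u c n :
  conv f (fun m => u m * c) n = conv f u n * c.
Proof.
  unfold conv. rewrite Rmult_comm, scal_sum. apply sum_eq; intros; ring.
Qed.

Lemma conv_assoc f g h n :
  conv (conv f g) h n = conv f (conv g h) n.
Proof.
  revert h. induction n as [|n IH]; intro h.
  - unfold conv; simpl; ring.
  - rewrite conv_back, conv_back, IH.
    rewrite (conv_back f (conv g h)).
    rewrite (conv_ext f f (fun j => conv g h (S j))
               (fun j => g (S j) * h 0%nat + conv g (fun j => h (S j)) j) n)
      by (intros; try reflexivity; apply conv_back).
    rewrite conv_plus_r, conv_scal_r.
    replace (conv g h 0) with (g 0%nat * h 0%nat) by (unfold conv; simpl; ring).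
    ring.
Qed.

Lemma Qs_len k : length (Qs k) = S k.
Proof. induction k; simpl; [reflexivity|]. rewrite length_app, IHk; simpl; lia. Qed.
Lemma Ps_len k : length (Ps k) = S k.
Proof. induction k; simpl; [reflexivity|]. rewrite length_app, IHk; simpl; lia. Qed.

Lemma Qs_nth k m : (m <= k)%nat -> nth m (Qs k) (fun _ => 0) = Q m.
Proof.
  induction k; intros H.
  - assert (m = 0%nat) by lia; subst; reflexivity.
  - destruct (Nat.eq_dec m (S k)) as [->|Hn]; [reflexivity|].
    simpl. rewrite app_nth1 by (rewrite Qs_len; lia). apply IHk; lia.
Qed.
Lemma Ps_nth k m : (m <= k)%nat -> nth m (Ps k) (fun _ => 0) = P m.
Proof.
  induction k; intros H.
  - assert (m = 0%nat) by lia; subst; reflexivity.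
  - destruct (Nat.eq_dec m (S k)) as [->|Hn]; [reflexivity|].
    simpl. rewrite app_nth1 by (rewrite Ps_len; lia). apply IHk; lia.
Qed.

Lemma Q_S k x : Q (S k) x =
  sum_f_R0 (fun m => Rint (Q m) x 1 * Q (k - m)%nat x) k.
Proof.
  unfold Q at 1. simpl. rewrite app_nth2 by (rewrite Qs_len; lia).
  rewrite Qs_len, Nat.sub_diag. simpl.
  apply sum_eq; intros i Hi. rewrite !Qs_nth by lia. reflexivity.
Qed.
Lemma P_S k x : P (S k) x =
  sum_f_R0 (fun m => (Rint (P m) 0 x + Rint (Q m) x 1) * P (k - m)%nat x) k.
Proof.
  unfold P at 1. simpl. rewrite app_nth2 by (rewrite Ps_len; lia).
  rewrite Ps_len, Nat.sub_diag. simpl.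
  apply sum_eq; intros i Hi. rewrite !Ps_nth by lia. reflexivity.
Qed.

Lemma Rint_RInt f a b : ex_RInt f a b -> Rint f a b = RInt f a b.
Proof.
  intros H. unfold Rint.
  destruct (excluded_middle_informative (inhabited (Riemann_integrable f a b))) as [Hi|Hn].
  - rewrite RInt_Reals with (pr := epsilon Hi (fun _ => True)). reflexivity.
  - exfalso; apply Hn; constructor; apply ex_RInt_Reals_0; exact H.
Qed.

Lemma Rint_zero a b : Rint (fun _ => 0) a b = 0.
Proof.
  rewrite Rint_RInt by apply ex_RInt_const. rewrite RInt_const.
  unfold scal; simpl; unfold mult; simpl. ring.
Qed.

Lemma Rint_point f a : Rint f a a = 0.
Proof. rewrite Rint_RInt by apply ex_RInt_point. rewrite RInt_point. reflexivity. Qed.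

Definition Ew (i : nat) (y : R) (b : bool) : R :=
  if Nat.even i then (if b then P (Nat.div2 i) y else Q (Nat.div2 i) y) else 0.

Definition Dw (a : nat) (x : R) (b : bool) : R :=
  if b then Rint (fun y => Ew a y true) 0 x + Rint (fun y => Ew a y false) x 1
  else Rint (fun y => Ew a y false) x 1.

Lemma Ew_even m y b : Ew (2 * m) y b = if b then P m y else Q m y.
Proof.
  unfold Ew. rewrite Nat.div2_double, Nat.even_mul. reflexivity.
Qed.
Lemma Ew_odd m y b : Ew (S (2 * m)) y b = 0.
Proof.
  unfold Ew. rewrite Nat.even_succ, Nat.odd_mul. simpl. reflexivity.
Qed.
Lemma Ew_0 y b : Ew 0 y b = 1.
Proof. destruct b; reflexivity. Qed.
Lemma Ew_1 y b : Ew 1 y b = 0.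
Proof. reflexivity. Qed.

Lemma Dw_odd m x b : Dw (S (2 * m)) x b = 0.
Proof.
  unfold Dw.
  assert (H : forall bb, (fun y => Ew (S (2 * m)) y bb) = (fun _ => 0)).
  { intros bb; apply functional_extensionality; intros; apply Ew_odd. }
  rewrite !H, !Rint_zero. destruct b; ring.
Qed.
Lemma Dw_even m x b : Dw (2 * m) x b =
  if b then Rint (P m) 0 x + Rint (Q m) x 1 else Rint (Q m) x 1.
Proof.
  unfold Dw.
  assert (H : forall bb, (fun y => Ew (2 * m) y bb) = (fun y => if bb then P m y else Q m y)).
  { intros bb; apply functional_extensionality; intros; apply Ew_even. }
  rewrite !H. reflexivity.
Qed.

Lemma sum_even_only (g : nat -> R) n :
  (forall m, g (S (2 * m)) = 0) ->
  sum_f_R0 g (2 * n) = sum_f_R0 (fun m => g (2 * m)%nat) n.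
Proof.
  intros Hg. induction n.
  - reflexivity.
  - replace (2 * S n)%nat with (S (S (2 * n))) by lia.
    rewrite !tech5, IHn, Hg. replace (S (S (2 * n))) with (2 * S n)%nat by lia. ring.
Qed.

Lemma parity n : exists m, n = (2 * m)%nat \/ n = S (2 * m).
Proof.
  induction n as [|n [m [->| ->]]].
  - exists 0%nat; left; reflexivity.
  - exists m; right; reflexivity.
  - exists (S m); left; lia.
Qed.

Lemma Ew_rec i x b :
  Ew (S (S i)) x b = conv (fun a => Dw a x b) (fun j => Ew j x b) i.
Proof.
  destruct (parity i) as [n [-> | ->]].
  - replace (S (S (2 * n))) with (2 * S n)%nat by lia.
    rewrite Ew_even. unfold conv.
    rewrite sum_even_only.
    2:{ intros m. rewrite Dw_odd. ring. }
    destruct b; [rewrite P_S | rewrite Q_S]; apply sum_eq; intros m Hm;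
      rewrite Dw_even; replace (2 * n - 2 * m)%nat with (2 * (n - m))%nat by lia;
      rewrite Ew_even; reflexivity.
  - replace (S (S (S (2 * n)))) with (S (2 * S n)) by lia.
    rewrite Ew_odd. unfold conv. symmetry. apply sum_eq_R0. intros a Ha.
    destruct (parity a) as [m [-> | ->]].
    + replace (S (2 * n) - 2 * m)%nat with (S (2 * (n - m))) by lia.
      rewrite Ew_odd; ring.
    + rewrite Dw_odd; ring.
Qed.

Lemma cont_sum (h : nat -> R -> R) n y0 :
  (forall i, (i <= n)%nat -> continuous (h i) y0) ->
  continuous (fun y => sum_f_R0 (fun i => h i y) n) y0.
Proof.
  induction n; intros H.
  - simpl. apply H; lia.
  - simpl. apply (continuous_plus (fun y => sum_f_R0 (fun i => h i y) n) (h (S n))).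
    + apply IHn; intros; apply H; lia.
    + apply H; lia.
Qed.

Lemma cont_mult (f g : R -> R) y0 :
  continuous f y0 -> continuous g y0 -> continuous (fun y => f y * g y) y0.
Proof. intros; apply (continuous_mult f g); auto. Qed.

Lemma cont_conv (u v : nat -> R -> R) n y0 :
  (forall i, (i <= n)%nat -> continuous (u i) y0) -> (forall i, (i <= n)%nat -> continuous (v i) y0) ->
  continuous (fun y => conv (fun a => u a y) (fun j => v j y) n) y0.
Proof.
  intros Hu Hv. unfold conv.
  apply (cont_sum (fun i y => u i y * v (n - i)%nat y)).
  intros; apply cont_mult; [apply Hu|apply Hv]; lia.
Qed.

Lemma exRInt_cont (g : R -> R) a b :
  (forall z, continuous g z) -> ex_RInt g a b.
Proof. intros Hg. apply (ex_RInt_continuous (V:=R_CompleteNormedModule)). intros; apply Hg. Qed.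

Lemma cont_RInt_up (g : R -> R) a y0 :
  (forall z, continuous g z) -> continuous (fun y => RInt g a y) y0.
Proof.
  intros Hg. apply (ex_derive_continuous (K:=R_AbsRing) (V:=R_NormedModule)). eexists.
  apply (is_derive_RInt g (fun y => RInt g a y) a y0).
  - apply filter_forall. intros b. apply (RInt_correct (V:=R_CompleteNormedModule)).
    apply exRInt_cont; exact Hg.
  - apply Hg.
Qed.

Lemma cont_Rint_up (g : R -> R) a y0 :
  (forall z, continuous g z) -> continuous (fun y => Rint g a y) y0.
Proof.
  intros Hg. apply (continuous_ext (fun y => RInt g a y)).
  - intros y. symmetry. apply Rint_RInt. apply exRInt_cont; exact Hg.
  - apply cont_RInt_up; auto.
Qed.

Lemma cont_Rint_lo (g : R -> R) a y0 :
  (forall z, continuous g z) -> continuous (fun y => Rint g y a) y0.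
Proof.
  intros Hg. apply (continuous_ext (fun y => opp (RInt g a y))).
  - intros y. rewrite Rint_RInt by (apply exRInt_cont; exact Hg).
    rewrite opp_RInt_swap; [reflexivity|]. apply exRInt_cont; exact Hg.
  - apply (continuous_opp (K:=R_AbsRing) (V:=R_NormedModule) (fun y => RInt g a y)). apply cont_RInt_up; auto.
Qed.

Lemma Ew_cont_aux n : forall i, (i <= n)%nat -> forall b y, continuous (fun z => Ew i z b) y.
Proof.
  induction n; intros i Hi b y.
  - assert (i = 0%nat) by lia; subst. apply (continuous_ext (fun _ => 1)).
    + intros; rewrite Ew_0; reflexivity.
    + apply continuous_const.
  - destruct i as [|[|i]].
    + apply (continuous_ext (fun _ => 1)).
      * intros; rewrite Ew_0; reflexivity.
      * apply continuous_const.
    + apply (continuous_ext (fun _ => 0)).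
      * intros; reflexivity.
      * apply continuous_const.
    + apply (continuous_ext (fun z => conv (fun a => Dw a z b) (fun j => Ew j z b) i)).
      * intros; rewrite Ew_rec; reflexivity.
      * apply (cont_conv (fun a z => Dw a z b) (fun j z => Ew j z b)).
        -- intros a Ha. unfold Dw. destruct b.
           ++ apply (continuous_plus (fun z => Rint (fun y => Ew a y true) 0 z)
                                        (fun z => Rint (fun y => Ew a y false) z 1)).
              ** apply cont_Rint_up; intros; apply IHn; lia.
              ** apply cont_Rint_lo; intros; apply IHn; lia.
           ++ apply cont_Rint_lo; intros; apply IHn; lia.
        -- intros j Hj. apply IHn; lia.
Qed.

Lemma Ew_cont i b y : continuous (fun z => Ew i z b) y.
Proof. apply (Ew_cont_aux i); lia. Qed.

Lemma RInt_sum (h : nat -> R -> R) n a b :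
  (forall i y, continuous (h i) y) ->
  RInt (fun y => sum_f_R0 (fun i => h i y) n) a b = sum_f_R0 (fun i => RInt (h i) a b) n.
Proof.
  intros Hh. induction n.
  - reflexivity.
  - simpl. rewrite <- IHn.
    apply (RInt_plus (V:=R_CompleteNormedModule) (fun y => sum_f_R0 (fun i => h i y) n) (h (S n))).
    + apply exRInt_cont. intros z. apply cont_sum. intros; apply Hh.
    + apply exRInt_cont. apply Hh.
Qed.

Lemma RInt_mulc (f : R -> R) c a b :
  (forall y, continuous f y) -> RInt (fun y => f y * c) a b = RInt f a b * c.
Proof.
  intros Hf.
  transitivity (RInt (fun y => scal c (f y)) a b).
  - apply RInt_ext. intros; unfold scal; simpl; unfold mult; simpl; ring.
  - rewrite (RInt_scal (V:=R_CompleteNormedModule)) by (apply exRInt_cont; exact Hf).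
    unfold scal; simpl; unfold mult; simpl; ring.
Qed.

Lemma Rint_conv (u : nat -> R -> R) (K : nat -> R) n (g : R -> R) a b :
  a <= b -> (forall i y, continuous (u i) y) ->
  (forall y, a < y < b -> g y = conv (fun i => u i y) K n) ->
  Rint g a b = conv (fun i => Rint (u i) a b) K n.
Proof.
  intros Hab Hu Hg.
  set (h := fun y => conv (fun i => u i y) K n).
  assert (Hhc : forall y, continuous h y).
  { intros y. unfold h. apply (cont_conv u (fun j _ => K j)).
    - intros; apply Hu.
    - intros; apply continuous_const. }
  assert (Heq : forall x, Rmin a b < x < Rmax a b -> h x = g x).
  { intros x Hx. rewrite Rmin_left, Rmax_right in Hx by lra. unfold h; rewrite Hg; auto. }
  assert (Hex : ex_RInt g a b).
  { apply (ex_RInt_ext (V:=R_NormedModule) h); auto. apply exRInt_cont; auto. }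
  rewrite Rint_RInt by exact Hex.
  rewrite <- (RInt_ext (V:=R_CompleteNormedModule) h g a b Heq).
  unfold h, conv.
  rewrite (RInt_sum (fun i y => u i y * K (n - i)%nat)).
  2:{ intros i y. apply cont_mult; [apply Hu|apply continuous_const]. }
  apply sum_eq; intros i Hi.
  rewrite RInt_mulc by apply Hu.
  rewrite Rint_RInt by (apply exRInt_cont; apply Hu). reflexivity.
Qed.

Definition F (k : nat) : FockV := omega_pow k vac.

Lemma F_S k l : F (S k) l = aop (F k) l + aadj (F k) l.
Proof. reflexivity. Qed.

Lemma aadj_cons g x xs : aadj g (x :: xs) =
  indb (incrb (x :: xs)) * Rint (fun y => g (y :: x :: xs)) 0 x
  + Rint (fun y => g (y :: x :: xs)) x 1.
Proof. reflexivity. Qed.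

Definition good (l : list R) : Prop :=
  Forall (fun z => 0 <= z <= 1) l /\ (l <> [] -> vshapeb l = true).

Lemma ltb_true x y : x < y -> ltb x y = true.
Proof. intros; unfold ltb; destruct (Rlt_dec x y); auto; lra. Qed.
Lemma ltb_false x y : ~ x < y -> ltb x y = false.
Proof. intros; unfold ltb; destruct (Rlt_dec x y); auto; lra. Qed.

Lemma incr_vshape l : incrb l = true -> l <> [] -> vshapeb l = true.
Proof.
  destruct l as [|x [|y t]]; intros H Hn; try reflexivity.
  - congruence.
  - change (orb (andb (ltb y x) (vshapeb (y::t))) (incrb (x::y::t)) = true). rewrite H. apply Bool.orb_true_r.
Qed.

Lemma good_tail x xs : good (x :: xs) -> good xs.
Proof.
  intros [Hf Hv]. split.
  - inversion Hf; auto.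
  - intros Hn. destruct xs as [|y t]; [congruence|].
    specialize (Hv ltac:(discriminate)).
    change (orb (andb (ltb y x) (vshapeb (y::t))) (incrb (x::y::t)) = true) in Hv.
    apply Bool.orb_true_iff in Hv as [Hv|Hv].
    + apply andb_prop in Hv; tauto.
    + apply andb_prop in Hv as [_ Hv]. apply incr_vshape; auto.
Qed.

Lemma good_hd x xs : good (x :: xs) -> 0 <= x <= 1.
Proof. intros [Hf _]; inversion Hf; auto. Qed.

Lemma good_up x xs y : good (x :: xs) -> x < y <= 1 ->
  good (y :: x :: xs) /\ incrb (y :: x :: xs) = false.
Proof.
  intros Hg Hy. pose proof (good_hd _ _ Hg) as Hx. destruct Hg as [Hf Hv]. split; [split|].
  - constructor; auto; lra.
  - intros _. change (orb (andb (ltb x y) (vshapeb (x::xs))) (incrb (y::x::xs)) = true). rewrite ltb_true by lra.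
    rewrite Hv by discriminate. reflexivity.
  - change (andb (ltb y x) (incrb (x::xs)) = false). rewrite ltb_false by lra. reflexivity.
Qed.

Lemma good_down x xs y : good (x :: xs) -> incrb (x :: xs) = true -> 0 <= y < x ->
  good (y :: x :: xs) /\ incrb (y :: x :: xs) = true.
Proof.
  intros Hg Hi Hy. pose proof (good_hd _ _ Hg) as Hx. destruct Hg as [Hf Hv].
  assert (Hinc : incrb (y :: x :: xs) = true).
  { change (andb (ltb y x) (incrb (x :: xs)) = true). rewrite ltb_true by lra; auto. }
  split; [split|]; auto.
  - constructor; auto; lra.
  - intros _; apply incr_vshape; auto; discriminate.
Qed.

Lemma aop_good g x xs : good (x :: xs) -> aop g (x :: xs) = g xs.
Proof.
  intros Hg. pose proof (good_hd _ _ Hg) as Hx. destruct Hg as [_ Hv].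
  unfold aop. rewrite Hv by discriminate. unfold ind01, indb.
  destruct (Rle_dec 0 x); [|lra]. destruct (Rle_dec x 1); [|lra]. ring.
Qed.

Lemma F_0_cons x xs : F 0 (x :: xs) = 0.
Proof. reflexivity. Qed.

Lemma F_main_aux n : forall k, (k <= n)%nat -> forall x xs, good (x :: xs) ->
  F (S k) (x :: xs) = conv (fun i => Ew i x (incrb (x :: xs))) (fun j => F j xs) k.
Proof.
  induction n; intros k Hk x xs Hg.
  - assert (k = 0%nat) by lia; subst.
    rewrite F_S, aop_good by auto. rewrite aadj_cons.
    change (fun y => F 0 (y :: x :: xs)) with (fun _ : R => 0).
    rewrite !Rint_zero. unfold conv; simpl. rewrite Ew_0. ring.
  - destruct k as [|k'].
    { apply IHn; auto; lia. }
    pose proof (good_hd _ _ Hg) as Hx.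
    set (b := incrb (x :: xs)).
    set (e := fun i => Ew i x b).
    set (G := fun j => F j xs).
    set (H := fun j => F j (x :: xs)).
    assert (Hup : Rint (fun y => F (S k') (y :: x :: xs)) x 1 =
                  conv (fun a => Rint (fun y => Ew a y false) x 1) H k').
    { apply (Rint_conv (fun a y => Ew a y false)); [lra| intros; apply Ew_cont |].
      intros y Hy. destruct (good_up x xs y Hg ltac:(lra)) as [Hg' Hi'].
      rewrite (IHn k') by (auto; lia). rewrite Hi'. reflexivity. }
    assert (Hadj : aadj (F (S k')) (x :: xs) = conv (fun a => Dw a x b) H k').
    { rewrite aadj_cons. fold b. rewrite Hup.
      destruct b eqn:Eb.
      - assert (Hdn : Rint (fun y => F (S k') (y :: x :: xs)) 0 x =
                  conv (fun a => Rint (fun y => Ew a y true) 0 x) H k').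
        { apply (Rint_conv (fun a y => Ew a y true)); [lra| intros; apply Ew_cont |].
          intros y Hy. destruct (good_down x xs y Hg Eb ltac:(lra)) as [Hg' Hi'].
          rewrite (IHn k') by (auto; lia). rewrite Hi'. reflexivity. }
        rewrite Hdn. simpl indb. rewrite Rmult_1_l, <- conv_plus_l. reflexivity.
      - simpl indb. rewrite Rmult_0_l, Rplus_0_l. reflexivity. }
    rewrite F_S, aop_good by auto. rewrite Hadj.
    fold b. fold e. fold G.
    rewrite conv_front. unfold e at 1. rewrite Ew_0, Rmult_1_l.
    fold (G (S k')). f_equal.
    destruct k' as [|k''].
    + unfold conv; simpl. unfold e, H. change (Ew 1 x b) with 0. change (F 0 (x :: xs)) with 0. ring.
    + rewrite (conv_back _ H), (conv_front (fun i => e (S i)) G). unfold e at 2. change (Ew 1 x b) with 0.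
      unfold H at 1. change (F 0 (x :: xs)) with 0. rewrite !Rmult_0_l, !Rmult_0_r, !Rplus_0_l.
      rewrite (conv_ext (fun i => e (S (S i))) (conv (fun a => Dw a x b) e) G G)
        by (intros; unfold e; try apply Ew_rec; reflexivity).
      rewrite conv_assoc. symmetry. apply conv_ext; [reflexivity|].
      intros j Hj. unfold H. rewrite (IHn j) by (auto; lia). reflexivity.
Qed.
Lemma F_main k x xs : good (x :: xs) ->
  F (S k) (x :: xs) = conv (fun i => Ew i x (incrb (x :: xs))) (fun j => F j xs) k.
Proof. apply (F_main_aux k); lia. Qed.

Lemma F_vac_aux n : forall k, (k <= n)%nat -> F k [] = Ew k 1 true.
Proof.
  induction n; intros k Hk.
  - assert (k = 0%nat) by lia; subst. rewrite Ew_0. reflexivity.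
  - destruct k as [|[|k']].
    + rewrite Ew_0; reflexivity.
    + rewrite F_S. unfold aop. unfold aadj.
      change (fun x => F 0 [x]) with (fun _ : R => 0). rewrite Rint_zero. rewrite Ew_1. ring.
    + rewrite F_S. unfold aop, aadj.
      rewrite Ew_rec.
      rewrite (Rint_conv (fun a y => Ew a y true) (fun j => F j []) k').
      3: intros; apply Ew_cont.
      2: lra.
      2:{ intros y Hy. rewrite F_main.
          - reflexivity.
          - split; [constructor; auto; lra | intros; reflexivity]. }
      rewrite Rplus_0_l. apply conv_ext.
      * intros i Hi. unfold Dw. rewrite Rint_point. ring.
      * intros j Hj. apply IHn; lia.
Qed.

Theorem mainTheorem3 : forall n : nat,
  phi_omega_pow (2 * n) = P n 1 /\ phi_omega_pow (2 * n + 1) = 0.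
Proof.
  intros n. unfold phi_omega_pow. split.
  - change (omega_pow (2 * n) vac []) with (F (2 * n) []).
    rewrite (F_vac_aux (2 * n)) by lia. rewrite Ew_even. reflexivity.
  - change (omega_pow (2 * n + 1) vac []) with (F (2 * n + 1) []).
    rewrite (F_vac_aux (2 * n + 1)) by lia.
    replace (2 * n + 1)%nat with (S (2 * n)) by lia. apply Ew_odd.
Qed.
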